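(* Under the standing assumptions, the matrices $\Gamma_{1,j}(a)$ ($0\le j\le n$) and $Q_{2,j}(a)$ ($0\le j\le n-1$) are invertible, and with $\mathbf r_j:=\Gamma_{1,j}(a)^{-1}\Theta_{1,j}(a)$ and $\mathbf t_j:=Q_{2,j}(a)^{-1}P_{2,j}(a)$ one has, for all $z\in\mathbb C$, $$d^{(2j+1)}(z)=\begin{pmatrix}I_q&\mathbf r_j\\0_q&I_q\end{pmatrix}\begin{pmatrix}I_q&0_q\\-(z-a)\mathbf m_j&I_q\end{pmatrix}\begin{pmatrix}I_q&-\mathbf r_j\\0_q&I_q\end{pmatrix},\qquad 0\le j\le n,$$ $$d^{(2j+2)}(z)=\begin{pmatrix}I_q&0_q\\-\mathbf t_j&I_q\end{pmatrix}\begin{pmatrix}I_q&(z-a)\mathbf l_j\\0_q&I_q\end{pmatrix}\begin{pmatrix}I_q&0_q\\ \mathbf t_j&I_q\end{pmatrix},\qquad 0\le j\le n-1.$$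
   Context: Let $q,n\in\mathbb N$ and let $a<b$ be real numbers. All matrices are complex; $I_q$, $0_q$ are the $q\times q$ identity and zero matrices. Let $s_0,\dots,s_{2n+1}$ be Hermitian $q\times q$ matrices and set $\widehat s_j:=-ab\,s_j+(a+b)s_{j+1}-s_{j+2}$. Define $H_{1,j}:=(s_{l+k})_{l,k=0}^j$, $H_{2,j}:=(\widehat s_{l+k})_{l,k=0}^{j}$, $K_{1,j}:=(bs_{l+k}-s_{l+k+1})_{l,k=0}^{j}$, $K_{2,j}:=(-as_{l+k}+s_{l+k+1})_{l,k=0}^j$. Standing assumption: $H_{1,n},H_{2,n-1},K_{1,n},K_{2,n}$ are positive definite. Let $T_0:=0_q$ and, for $j\ge1$, let $T_j$ be the $(j+1)\times(j+1)$ block matrix (blocks $q\times q$) with $I_q$ in block positions $(l+1,l)$, $l=0,\dots,j-1$, and $0_q$ elsewhere; $R_j(z):=(I_{(j+1)q}-zT_j)^{-1}$; $v_j:=\mathrm{col}(I_q,0_q,\dots,0_q)\in\mathbb C^{(j+1)q\times q}$. Let $u_{2,0}:=-(a+b)s_0+s_1$, $u_{2,j}:=\mathrm{col}(u_{2,0},-\widehat s_0,\dots,-\widehat s_{j-1})$, $\widetilde u_{1,j}:=\mathrm{col}(s_0,s_1-bs_0,\dots,s_j-bs_{j-1})$; for $j\ge1$, $Y_{2,j}:=\mathrm{col}(\widehat s_j,\dots,\widehat s_{2j-1})$, $\widetilde Y_{1,j}:=\mathrm{col}(bs_j-s_{j+1},\dots,bs_{2j-1}-s_{2j})$. Schur complements: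 $\widehat H_{2,0}:=\widehat s_0$, $\widehat H_{2,j}:=\widehat s_{2j}-Y_{2,j}^*H_{2,j-1}^{-1}Y_{2,j}$; $\widehat K_{1,0}:=bs_0-s_1$, $\widehat K_{1,j}:=bs_{2j}-s_{2j+1}-\widetilde Y_{1,j}^*K_{1,j-1}^{-1}\widetilde Y_{1,j}$. Polynomials: $P_{2,0}:=I_q$, $Q_{2,0}(z):=-(u_{2,0}+zs_0)$, $\Gamma_{1,0}:=I_q$, $\Theta_{1,0}:=s_0$; for $j\ge1$: $P_{2,j}(z):=(-Y_{2,j}^*H_{2,j-1}^{-1},I_q)R_j(z)v_j$, $Q_{2,j}(z):=-(-Y_{2,j}^*H_{2,j-1}^{-1},I_q)R_j(z)(u_{2,j}+zv_js_0)$, $\Gamma_{1,j}(z):=(-\widetilde Y_{1,j}^*K_{1,j-1}^{-1},I_q)R_j(z)v_j$, $\Theta_{1,j}(z):=(-\widetilde Y_{1,j}^*K_{1,j-1}^{-1},I_q)R_j(z)\widetilde u_{1,j}$. DSM parameters: $\lambda_j:=(u_{2,j}+av_js_0)^*R_j(a)^*H_{2,j}^{-1}R_j(a)(u_{2,j}+av_js_0)$, $\mu_j:=v_j^*R_j(a)^*K_{1,j}^{-1}R_j(a)v_j$; $\mathbf l_0:=\lambda_0$, $\mathbf l_j:=\lambda_j-\lambda_{j-1}$ ($1\le j\le n-1$); $\mathbf m_0:=\mu_0$, $\mathbf m_j:=\mu_j-\mu_{j-1}$ ($1\le j\le n$). Blaschke–Potapov factors: for $0\le j\le n-1$, $d^{(2j+2)}(z):=\begin{pmatrix}I_q+(z-a)Q_{2,j}^*(a)\widehat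 H_{2,j}^{-1}P_{2,j}(a) & (z-a)Q_{2,j}^*(a)\widehat H_{2,j}^{-1}Q_{2,j}(a)\\ -(z-a)P_{2,j}^*(a)\widehat H_{2,j}^{-1}P_{2,j}(a) & I_q-(z-a)P_{2,j}^*(a)\widehat H_{2,j}^{-1}Q_{2,j}(a)\end{pmatrix}$; for $0\le j\le n$, $d^{(2j+1)}(z):=\begin{pmatrix}I_q-(z-a)\Theta_{1,j}^*(a)\widehat K_{1,j}^{-1}\Gamma_{1,j}(a) & (z-a)\Theta_{1,j}^*(a)\widehat K_{1,j}^{-1}\Theta_{1,j}(a)\\ -(z-a)\Gamma_{1,j}^*(a)\widehat K_{1,j}^{-1}\Gamma_{1,j}(a) & I_q+(z-a)\Gamma_{1,j}^*(a)\widehat K_{1,j}^{-1}\Theta_{1,j}(a)\end{pmatrix}$. Here $F^*(a)$ means $(F(a))^*$. *)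

(* Defs.v *)
From HB Require Import structures.
From mathcomp Require Import all_boot all_order all_algebra.
Set Implicit Arguments. Unset Strict Implicit. Unset Printing Implicit Defensive.
Import Order.TTheory GRing.Theory Num.Theory.
Local Open Scope ring_scope.

Definition ctmx (C : numClosedFieldType) m n (A : 'M[C]_(m, n)) : 'M[C]_(n, m) :=
  (map_mx (fun x : C => x^*) A)^T.

Definition hermmx (C : numClosedFieldType) n (A : 'M[C]_n) : Prop := ctmx A = A.

Definition posdef (C : numClosedFieldType) n (A : 'M[C]_n) : Prop :=
  hermmx A /\ forall x : 'cV[C]_n, x != 0 -> 0 < (ctmx x *m A *m x) 0 0.

Definition bsz (q j : nat) : nat := (\sum_(i < j.+1) q)%N.

Lemma bszS q j : bsz q j.+1 = (bsz q j + q)%N.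
Proof. by rewrite /bsz big_ord_recr. Qed.

Definition bhankel (C : numClosedFieldType) q (F : nat -> 'M[C]_q) (j : nat)
  : 'M[C]_(bsz q j) :=
  @mxblock C j.+1 j.+1 (fun _ => q) (fun _ => q) (fun l k => F (l + k)%N).

Definition bcol (C : numClosedFieldType) q (F : nat -> 'M[C]_q) (j : nat)
  : 'M[C]_(bsz q j, q) :=
  @mxcol C j.+1 (fun _ => q) q (fun l => F (l : nat)).

Definition rowXI (C : numClosedFieldType) q j (X : 'M[C]_(q, bsz q j))
  : 'M[C]_(q, bsz q j.+1) :=
  castmx (erefl q, esym (bszS q j)) (row_mx X 1%:M).

Section Objects.
Variables (C : numClosedFieldType) (q : nat) (s : nat -> 'M[C]_q) (a b : C).

Definition shat (j : nat) : 'M[C]_q :=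
  (- (a * b)) *: s j + (a + b) *: s j.+1 - s j.+2.

Definition H1 j := bhankel s j.
Definition H2 j := bhankel shat j.
Definition K1 j := bhankel (fun k => b *: s k - s k.+1) j.
Definition K2 j := bhankel (fun k => - a *: s k + s k.+1) j.

Definition Tm j : 'M[C]_(bsz q j) :=
  @mxblock C j.+1 j.+1 (fun _ => q) (fun _ => q)
    (fun l k => if (l : nat) == k.+1 then 1%:M else 0).

Definition Rm j (z : C) : 'M[C]_(bsz q j) := invmx (1%:M - z *: Tm j).

Definition vv j : 'M[C]_(bsz q j, q) := bcol (fun l => if l == 0%N then 1%:M else 0) j.

Definition u20 : 'M[C]_q := - (a + b) *: s 0 + s 1.

Definition u2 j : 'M[C]_(bsz q j, q) :=
  bcol (fun l => if l == 0%N then u20 else - shat l.-1) j.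

Definition ut1 j : 'M[C]_(bsz q j, q) :=
  bcol (fun l => if l == 0%N then s 0 else s l - b *: s l.-1) j.

(* Y_{2,j'+1} = col(shat (j'+1), ..., shat (2j'+1)) *)
Definition Y2 j' : 'M[C]_(bsz q j', q) := bcol (fun l => shat (j'.+1 + l)) j'.
(* Ytilde_{1,j'+1} = col(b s_{j'+1} - s_{j'+2}, ..., b s_{2j'+1} - s_{2j'+2}) *)
Definition Yt1 j' : 'M[C]_(bsz q j', q) :=
  bcol (fun l => b *: s (j'.+1 + l) - s (j'.+1 + l).+1) j'.

Definition Hhat2 j : 'M[C]_q :=
  match j with
  | 0 => shat 0
  | j'.+1 => shat j.*2 - ctmx (Y2 j') *m invmx (H2 j') *m Y2 j'
  end.

Definition Khat1 j : 'M[C]_q :=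
  match j with
  | 0 => b *: s 0 - s 1
  | j'.+1 => b *: s j.*2 - s j.*2.+1 - ctmx (Yt1 j') *m invmx (K1 j') *m Yt1 j'
  end.

Definition P2 j (z : C) : 'M[C]_q :=
  match j with
  | 0 => 1%:M
  | j'.+1 => rowXI (- (ctmx (Y2 j') *m invmx (H2 j'))) *m Rm j'.+1 z *m vv j'.+1
  end.

Definition Q2 j (z : C) : 'M[C]_q :=
  match j with
  | 0 => - (u20 + z *: s 0)
  | j'.+1 => - (rowXI (- (ctmx (Y2 j') *m invmx (H2 j'))) *m Rm j'.+1 z
                 *m (u2 j'.+1 + z *: (vv j'.+1 *m s 0)))
  end.

Definition Gam1 j (z : C) : 'M[C]_q :=
  match j with
  | 0 => 1%:M
  | j'.+1 => rowXI (- (ctmx (Yt1 j') *m invmx (K1 j'))) *m Rm j'.+1 z *m vv j'.+1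
  end.

Definition The1 j (z : C) : 'M[C]_q :=
  match j with
  | 0 => s 0
  | j'.+1 => rowXI (- (ctmx (Yt1 j') *m invmx (K1 j'))) *m Rm j'.+1 z *m ut1 j'.+1
  end.

Definition lam j : 'M[C]_q :=
  let w := u2 j + a *: (vv j *m s 0) in
  ctmx w *m ctmx (Rm j a) *m invmx (H2 j) *m Rm j a *m w.

Definition mu j : 'M[C]_q :=
  ctmx (vv j) *m ctmx (Rm j a) *m invmx (K1 j) *m Rm j a *m vv j.

Definition lbf j : 'M[C]_q := if j is j'.+1 then lam j - lam j' else lam 0.
Definition mbf j : 'M[C]_q := if j is j'.+1 then mu j - mu j' else mu 0.

Definition d_even j (z : C) : 'M[C]_(q + q) :=
  let P := P2 j a in let Q := Q2 j a in let Hi := invmx (Hhat2 j) in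
  block_mx (1%:M + (z - a) *: (ctmx Q *m Hi *m P)) ((z - a) *: (ctmx Q *m Hi *m Q))
           (- ((z - a) *: (ctmx P *m Hi *m P))) (1%:M - (z - a) *: (ctmx P *m Hi *m Q)).

Definition d_odd j (z : C) : 'M[C]_(q + q) :=
  let G := Gam1 j a in let T := The1 j a in let Ki := invmx (Khat1 j) in
  block_mx (1%:M - (z - a) *: (ctmx T *m Ki *m G)) ((z - a) *: (ctmx T *m Ki *m T))
           (- ((z - a) *: (ctmx G *m Ki *m G))) (1%:M + (z - a) *: (ctmx G *m Ki *m T)).

End Objects.

(* Main.v *)
Require Import Defs.
From HB Require Import structures.
From mathcomp Require Import all_boot all_order all_algebra.
From mathcomp Require Import ring zify.
Set Implicit Arguments. Unset Strict Implicit. Unset Printing Implicit Defensive.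
Import Order.TTheory GRing.Theory Num.Theory.
Local Open Scope ring_scope.

Section CT.
Variable C : numClosedFieldType.

Lemma ctmxK m n (A : 'M[C]_(m, n)) : ctmx (ctmx A) = A.
Proof. by apply/matrixP => i j; rewrite !mxE conjCK. Qed.

Lemma ctmx_mul m n p (A : 'M[C]_(m, n)) (B : 'M[C]_(n, p)) :
  ctmx (A *m B) = ctmx B *m ctmx A.
Proof. by rewrite /ctmx map_mxM trmx_mul. Qed.

Lemma ctmxD m n (A B : 'M[C]_(m, n)) : ctmx (A + B) = ctmx A + ctmx B.
Proof. by apply/matrixP => i j; rewrite !mxE rmorphD. Qed.

Lemma ctmxN m n (A : 'M[C]_(m, n)) : ctmx (- A) = - ctmx A.
Proof. by apply/matrixP => i j; rewrite !mxE rmorphN. Qed.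

Lemma ctmxB m n (A B : 'M[C]_(m, n)) : ctmx (A - B) = ctmx A - ctmx B.
Proof. by rewrite ctmxD ctmxN. Qed.

Lemma ctmx0 m n : ctmx (0 : 'M[C]_(m, n)) = 0.
Proof. by apply/matrixP => i j; rewrite !mxE rmorph0. Qed.

Lemma ctmxZ m n x (A : 'M[C]_(m, n)) : ctmx (x *: A) = x^* *: ctmx A.
Proof. by apply/matrixP => i j; rewrite !mxE rmorphM. Qed.

Lemma ctmx1 n : ctmx (1%:M : 'M[C]_n) = 1%:M.
Proof. by rewrite /ctmx map_mx1 trmx1. Qed.

Lemma ctmx_sum m n (I : finType) (F : I -> 'M[C]_(m, n)) :
  ctmx (\sum_i F i) = \sum_i ctmx (F i).
Proof.
apply/matrixP => i j; rewrite !mxE !summxE rmorph_sum; apply: eq_bigr => k _.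
by rewrite !mxE.
Qed.

Lemma ctmx_inv n (A : 'M[C]_n) : ctmx (invmx A) = invmx (ctmx A).
Proof. by rewrite /ctmx map_invmx trmx_inv. Qed.

Lemma ctmx_unit n (A : 'M[C]_n) : (ctmx A \in unitmx) = (A \in unitmx).
Proof. by rewrite /ctmx unitmx_tr map_unitmx. Qed.

Lemma ctmx_mxcol k (p_ : 'I_k -> nat) n (F : forall i, 'M[C]_(p_ i, n)) :
  ctmx (\mxcol_i F i) = \mxrow_i ctmx (F i).
Proof. by apply/matrixP => i j; rewrite !mxE. Qed.

Lemma ctmx_real (x : C) : x \is Num.real -> x^* = x.
Proof. exact: conj_Creal. Qed.

End CT.

Lemma bszE q j : bsz q j = (j.+1 * q)%N.
Proof. by rewrite /bsz sum_nat_const card_ord. Qed.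

Lemma sigE q j (s : 'I_(bsz q j)) :
  (@tagnat.sig1 j.+1 (fun _ => q) s : nat) = (s %/ q)%N /\
  (@tagnat.sig2 j.+1 (fun _ => q) s : nat) = (s %% q)%N.
Proof.
have E := tagnat.rect s.
have sq : (tagnat.sig2 s < q)%N by case: (tagnat.sig2 s).
have S1 : (tagnat.sig1 s <= j.+1)%N by apply: ltnW; case: (tagnat.sig1 s).
have E2 : (\sum_(i < j.+1 | (i < tagnat.sig1 s)%N) q = tagnat.sig1 s * q)%N.
  by rewrite (big_ord_narrow S1) sum_nat_const card_ord.
have E3 := etrans E (congr1 (addn^~ (tagnat.sig2 s : nat)) E2).
by rewrite E3 divnMDl ?(leq_ltn_trans _ sq) // divn_small // addn0 modnMDl modn_small.
Qed.

Section Blocks.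
Variable C : numClosedFieldType.

Definition bc (q m : nat) (g : nat -> 'M[C]_(q, m)) (j : nat) : 'M[C]_(bsz q j, m) :=
  @mxcol C j.+1 (fun _ => q) m (fun l => g l).

Lemma bcolE q (g : nat -> 'M[C]_q) j : bcol g j = bc g j.
Proof. by []. Qed.

Lemma bcE q m j (g : nat -> 'M[C]_(q, m)) s k :
  bc g j s k = g (s %/ q)%N (@tagnat.sig2 j.+1 (fun _ => q) s) k.
Proof. by rewrite /bc mxE (sigE s).1. Qed.

Lemma bcS q m j (g : nat -> 'M[C]_(q, m)) :
  bc g j.+1 = castmx (esym (bszS q j), erefl) (col_mx (bc g j) (g j.+1)).
Proof.
apply/matrixP => s k; rewrite castmxE bcE /= mxE.
case: splitP => s' /= Es'.
  rewrite bcE -Es' cast_ord_id.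
  have -> : (tagnat.sig2 s' : 'I_q) = (tagnat.sig2 s : 'I_q).
    by apply/val_inj; rewrite /= (sigE s).2 (sigE s').2 Es'.
  by [].
rewrite cast_ord_id.
have q0 : (0 < q)%N by case: (s') => x; case: (q) => //.
have -> : (s %/ q)%N = j.+1.
  by rewrite Es' bszE divnMDl // divn_small ?addn0.
have -> : (tagnat.sig2 s : 'I_q) = s'.
  by apply/val_inj; rewrite /= (sigE s).2 Es' bszE modnMDl modn_small.
by [].
Qed.

Lemma mul_cast_row_col q m n p (e : n = p) (X : 'M[C]_(q, n)) (Y : 'M[C]_(n, m)) :
  castmx (erefl, e) X *m castmx (e, erefl) Y = X *m Y.
Proof. by case: p / e. Qed.

Lemma rowXI_mul q j (X : 'M[C]_(q, bsz q j)) m (g : nat -> 'M[C]_(q, m)) :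
  rowXI X *m bc g j.+1 = X *m bc g j + g j.+1.
Proof.
rewrite /rowXI bcS.
by rewrite mul_cast_row_col mul_row_col mul1mx.
Qed.

End Blocks.

Section Blocks2.
Variable C : numClosedFieldType.
Implicit Types q j : nat.

Lemma mul_row_bc q m j (X : 'M[C]_(q, bsz q j)) (g : nat -> 'M[C]_(q, m)) :
  X *m bc g j = \sum_(k < j.+1) submxrow X k *m g k.
Proof. by rewrite -{1}[X]submxrowK mul_mxrow_mxcol. Qed.

Lemma mul_ct_bc q m n j (f : nat -> 'M[C]_(q, n)) (g : nat -> 'M[C]_(q, m)) :
  ctmx (bc f j) *m bc g j = \sum_(k < j.+1) ctmx (f k) *m g k.
Proof. by rewrite /bc ctmx_mxcol mul_mxrow_mxcol. Qed.

Lemma mul_hankel_bc q m j (h : nat -> 'M[C]_q) (g : nat -> 'M[C]_(q, m)) :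
  bhankel h j *m bc g j = bc (fun l => \sum_(k < j.+1) h (l + k)%N *m g k) j.
Proof. by rewrite /bhankel mul_mxblock_mxrow. Qed.

Lemma mul_bc q m n j (g : nat -> 'M[C]_(q, m)) (A : 'M[C]_(m, n)) :
  bc g j *m A = bc (fun l => g l *m A) j.
Proof. by rewrite /bc mxcol_mul. Qed.

Lemma bcD q m j (f g : nat -> 'M[C]_(q, m)) : bc f j + bc g j = bc (fun l => f l + g l) j.
Proof. by rewrite /bc mxcolD. Qed.

Lemma bcZ q m j x (f : nat -> 'M[C]_(q, m)) : x *: bc f j = bc (fun l => x *: f l) j.
Proof. by apply/matrixP => s t; rewrite !mxE. Qed.

Lemma bcN q m j (f : nat -> 'M[C]_(q, m)) : - bc f j = bc (fun l => - f l) j.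
Proof. by apply/matrixP => s t; rewrite !mxE. Qed.

Lemma eq_bc q m j (f g : nat -> 'M[C]_(q, m)) : (forall l, (l <= j)%N -> f l = g l) ->
  bc f j = bc g j.
Proof. by move=> E; apply: eq_mxcol => l; apply: E; rewrite -ltnS. Qed.

Lemma sum_delta (V : zmodType) n l (F : nat -> V) :
  \sum_(k < n) (if l == (k : nat) then F k else 0) = if (l < n)%N then F l else 0.
Proof.
elim: n => [|n IH]; first by rewrite big_ord0.
rewrite big_ord_recr /= IH.
case: (ltngtP l n) => [lt|gt|->] /=.
- by rewrite addr0 (ltn_trans lt).
- by rewrite addr0 ltnS leqNgt gt.
- by rewrite add0r ltnSn.
Qed.

Lemma one_mxblock q j :
  (1%:M : 'M[C]_(bsz q j)) =
  @mxblock C j.+1 j.+1 (fun _ => q) (fun _ => q) (fun l k => if (l : nat) == k then 1%:M else 0).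
Proof.
apply/matrixP => s t; rewrite !mxE.
have [s1 s2] := sigE s; have [t1 t2] := sigE t.
have -> : (s == t) = ((tagnat.sig1 s == tagnat.sig1 t :> nat) && (tagnat.sig2 s == tagnat.sig2 t :> nat)).
  rewrite s1 s2 t1 t2.
  apply/eqP/andP => [->|[/eqP E1 /eqP E2]]; first by [].
  by apply/val_inj => /=; rewrite (divn_eq s q) (divn_eq t q) E1 E2.
case: (tagnat.sig1 s == tagnat.sig1 t :> nat) => /=; last by rewrite mxE.
by rewrite mxE.
Qed.

Lemma oneT_bc q m j z (g : nat -> 'M[C]_(q, m)) :
  (1%:M - z *: Tm C q j) *m bc g j =
  bc (fun l => g l - (if l is l'.+1 then z *: g l' else 0)) j.
Proof.
have -> : (1%:M - z *: Tm C q j) = @mxblock C j.+1 j.+1 (fun _ => q) (fun _ => q)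
   (fun l k => (if (l : nat) == k then 1%:M else 0) - z *: (if (l : nat) == k.+1 then 1%:M else 0)).
  by rewrite one_mxblock /Tm; apply/matrixP => s t; rewrite !mxE.
rewrite mul_mxblock_mxrow; apply: eq_mxcol => l.
under eq_bigr do rewrite mulmxBl -scalemxAl.
rewrite sumrB -scaler_sumr.
have -> : \sum_(i < j.+1) (if (l : nat) == i then 1%:M else 0) *m g i = g l.
  rewrite (eq_bigr (fun i : 'I_j.+1 => if (l:nat) == i then g i else 0)).
    by rewrite sum_delta ltn_ord.
  by move=> i _; case: eqP; rewrite ?mul1mx ?mul0mx.
case: l => [[|l] Hl] /=.
  by rewrite big1 ?scaler0 // => i _; rewrite mul0mx.
rewrite (eq_bigr (fun i : 'I_j.+1 => if l == i then g i else 0)).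
  by rewrite sum_delta (ltn_trans _ Hl).
by move=> i _; rewrite eqSS; case: eqP; rewrite ?mul1mx ?mul0mx.
Qed.

Definition RS (q m : nat) (z : C) (g : nat -> 'M[C]_(q, m)) (l : nat) :=
  \sum_(k < l.+1) z ^+ (l - k) *: g k.

Lemma RS0 q m z (g : nat -> 'M[C]_(q, m)) : RS z g 0 = g 0.
Proof. by rewrite /RS big_ord1 expr0 scale1r. Qed.

Lemma RSS q m z (g : nat -> 'M[C]_(q, m)) l : RS z g l.+1 = z *: RS z g l + g l.+1.
Proof.
rewrite /RS big_ord_recr /= subnn expr0 scale1r scaler_sumr; congr (_ + _).
by apply: eq_bigr => i _; rewrite scalerA -exprS subSn // -ltnS.
Qed.

Lemma Rm_bc q m j z (g : nat -> 'M[C]_(q, m)) :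
  Rm q j z *m bc g j = bc (RS z g) j.
Proof.
have E : (1%:M - z *: Tm C q j) *m bc (RS z g) j = bc g j.
  rewrite oneT_bc; apply: eq_bc => [[|l]] _; first by rewrite RS0 subr0.
  by rewrite RSS addrC addKr.
suff U : (1%:M - z *: Tm C q j) \in unitmx by rewrite /Rm -E mulKmx.
pose L : 'M[C]_(bsz q j) := @mxrow C j.+1 (fun _ => q) (bsz q j)
  (fun k => bc (RS z (fun l => if l == (k : nat) then 1%:M else 0)) j).
suff : (1%:M - z *: Tm C q j) *m L = 1%:M by case/mulmx1_unit.
rewrite /L mul_mxrow [RHS]one_mxblock mxblockEh; apply: eq_mxrow => k.
rewrite oneT_bc; apply: eq_mxcol => l /=.
case: (nat_of_ord l) => [|l']; first by rewrite RS0 subr0.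
by rewrite RSS addrC addKr.
Qed.

End Blocks2.

Lemma sum_trunc (V : zmodType) n j (F : nat -> V) : (j <= n)%N ->
  (forall l, (j < l)%N -> F l = 0) ->
  \sum_(l < n.+1) F l = \sum_(l < j.+1) F l.
Proof.
move=> jn F0; rewrite -!(big_mkord xpredT) (big_cat_nat _ (n := j.+1)) //=.
by rewrite [X in _ + X]big1_seq ?addr0 // => i /andP[_]; rewrite mem_index_iota => /andP[Hi _]; exact: F0.
Qed.

Section PD.
Variable C : numClosedFieldType.

Definition QF q j (h : nat -> 'M[C]_q) (F : nat -> 'M[C]_q) : 'M[C]_q :=
  \sum_(l < j.+1) \sum_(k < j.+1) F l *m h (l + k)%N *m ctmx (F k).

Lemma QF_pos q n j (h : nat -> 'M[C]_q) (F : nat -> 'M[C]_q) l0 (v : 'rV[C]_q) :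
  posdef (bhankel h n) -> (j <= n)%N -> (l0 <= j)%N -> F l0 = 1%:M -> v != 0 ->
  0 < (v *m QF j h F *m ctmx v) 0 0.
Proof.
move=> [_ Hp] jn l0j Fl0 v0.
pose g := fun k => if (k <= j)%N then ctmx (F k) *m ctmx v else 0.
have x0 : bc g n != 0.
  apply/negP => /eqP x0.
  have := congr1 (fun M => @submxcol C n.+1 (fun _ => q) 1 M (inord l0)) x0.
  rewrite /bc mxcolK submxcol0 inordK ?ltnS ?(leq_trans l0j) // /g l0j Fl0 ctmx1 mul1mx.
  by move=> /(congr1 (@ctmx C _ _)); rewrite ctmxK ctmx0 => v00; rewrite v00 eqxx in v0.
have := Hp _ x0; rewrite -mulmxA mul_hankel_bc mul_ct_bc.
suff -> : \sum_(k < n.+1) ctmx (g k) *m (\sum_(k0 < n.+1) h (k + k0)%N *m g k0) =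
          v *m QF j h F *m ctmx v by [].
rewrite (@sum_trunc _ n j (fun k => ctmx (g k) *m (\sum_(k0 < n.+1) h (k + k0)%N *m g k0))) //;
  last by move=> l jl; rewrite /g leqNgt jl /= ctmx0 mul0mx.
rewrite /QF mulmx_sumr mulmx_suml; apply: eq_bigr => l _.
have -> : g l = ctmx (F l) *m ctmx v by rewrite /g -ltnS ltn_ord.
rewrite ctmx_mul !ctmxK.
rewrite (@sum_trunc _ n j (fun k0 => h (l + k0)%N *m g k0)) //;
  last by move=> k jk; rewrite /g leqNgt jk /= mulmx0.
rewrite !mulmx_sumr mulmx_suml; apply: eq_bigr => k _.
have -> : g k = ctmx (F k) *m ctmx v by rewrite /g -ltnS ltn_ord.
by rewrite !mulmxA.
Qed.

Lemma QF_unit q n j (h : nat -> 'M[C]_q) (F : nat -> 'M[C]_q) l0 :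
  posdef (bhankel h n) -> (j <= n)%N -> (l0 <= j)%N -> F l0 = 1%:M ->
  QF j h F \in unitmx.
Proof.
move=> Hp jn l0j Fl0; rewrite unitmxE unitfE; apply/negP => /det0P[v v0 vM].
have := QF_pos Hp jn l0j Fl0 v0; rewrite vM mul0mx mxE ltxx.
by case.
Qed.

Lemma QF_herm q j (h : nat -> 'M[C]_q) (F : nat -> 'M[C]_q) :
  (forall k, (k <= j.*2)%N -> ctmx (h k) = h k) -> ctmx (QF j h F) = QF j h F.
Proof.
move=> Hh; rewrite /QF ctmx_sum (exchange_big) /=; apply: eq_bigr => k _.
rewrite ctmx_sum; apply: eq_bigr => l _.
have lk : (k + l <= j.*2)%N by rewrite -addnn leq_add // -ltnS.
by rewrite !ctmx_mul ctmxK (Hh _ lk) !mulmxA addnC.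
Qed.

End PD.

Section OP.
Variable C : numClosedFieldType.
Variable q : nat.
Implicit Types h : nat -> 'M[C]_q.

Definition Yc h j' : 'M[C]_(bsz q j', q) := bc (fun l => h (j'.+1 + l)%N) j'.

Definition Acoef h j' : 'M[C]_(q, bsz q j') :=
  - (ctmx (Yc h j') *m invmx (bhankel h j')).

Definition pco h j' (k : nat) : 'M[C]_q :=
  if (k < j'.+1)%N then @submxrow C j'.+1 (fun _ => q) q (Acoef h j') (inord k) else 1%:M.

Lemma pco_last h j' : pco h j' j'.+1 = 1%:M.
Proof. by rewrite /pco ltnn. Qed.

Lemma pco_vec h j' m (g : nat -> 'M[C]_(q, m)) :
  rowXI (Acoef h j') *m bc g j'.+1 = \sum_(k < j'.+2) pco h j' k *m g k.
Proof.
rewrite rowXI_mul mul_row_bc [RHS]big_ord_recr /= pco_last mul1mx; congr (_ + _).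
apply: eq_bigr => k _; rewrite /pco /= ltn_ord inord_val //.
Qed.

Lemma AH h j' : bhankel h j' \in unitmx ->
  Acoef h j' *m bhankel h j' = - ctmx (Yc h j').
Proof. by move=> U; rewrite /Acoef mulNmx mulmxKV. Qed.

Lemma pco_orth h j' : bhankel h j' \in unitmx ->
  (forall k, (k <= j'.*2.+1)%N -> ctmx (h k) = h k) ->
  forall l, (l < j'.+1)%N -> \sum_(k < j'.+2) pco h j' k *m h (k + l)%N = 0.
Proof.
move=> U Hh l lj.
have E := AH U.
rewrite -{1}[Acoef h j']submxrowK mul_mxrow_mxblock /Yc /bc ctmx_mxcol -mxrowN in E.
have := congr1 (fun M => @submxrow C j'.+1 (fun _ => q) q M (inord l)) E.
rewrite !mxrowK inordK // => El.
rewrite [LHS]big_ord_recr /= pco_last mul1mx.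
rewrite (eq_bigr (fun k : 'I_j'.+1 => submxrow (Acoef h j') k *m h (k + l)%N)); last first.
  by move=> k _; rewrite /pco ltn_ord inord_val.
have hl : (j'.+1 + l <= j'.*2.+1)%N by rewrite -addnn -addSn leq_add.
by rewrite El Hh // addNr.
Qed.

Lemma pco_hat h j' : bhankel h j' \in unitmx ->
  h (j'.+1).*2 - ctmx (Yc h j') *m invmx (bhankel h j') *m Yc h j' =
  \sum_(k < j'.+2) pco h j' k *m h (k + j'.+1)%N.
Proof.
move=> U.
rewrite [RHS]big_ord_recr /= pco_last mul1mx addnn addrC; congr (_ + _).
rewrite -mulNmx -/(Acoef h j') /Yc mul_row_bc; apply: eq_bigr => k _.
by rewrite /pco ltn_ord addnC inord_val.
Qed.

End OP.

Section Schur.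
Variable C : numClosedFieldType.
Variable q : nat.
Implicit Types h p V Y : nat -> 'M[C]_q.

Definition orth h j p := forall l, (l < j)%N -> \sum_(k < j.+1) p k *m h (k + l)%N = 0.
Definition hermh h j := forall k, (k <= j.*2)%N -> ctmx (h k) = h k.

Definition hatm h j p := \sum_(k < j.+1) p k *m h (k + j)%N.

Lemma hat_QF h j p : orth h j p -> p j = 1%:M -> hermh h j -> hatm h j p = QF j h p.
Proof.
move=> O pj Hh; rewrite /QF exchange_big /= big_ord_recr /= big1 ?add0r.
  rewrite -mulmx_suml pj ctmx1 mulmx1; apply: eq_bigr => k _; by rewrite addnC.
move=> k _; rewrite -mulmx_suml.
rewrite (eq_bigr (fun i : 'I_j.+1 => p i *m h (i + k)%N)); first by rewrite O // mul0mx.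
by move=> i _; rewrite addnC.
Qed.

Lemma sum_adj h j p l : hermh h j -> (l <= j)%N ->
  \sum_(k < j.+1) h (l + k)%N *m ctmx (p k) = ctmx (\sum_(k < j.+1) p k *m h (k + l)%N).
Proof.
move=> Hh lj; rewrite ctmx_sum; apply: eq_bigr => k _.
have kj : (k <= j)%N := ltn_ord k.
have lk : (k + l <= j.*2)%N by rewrite -addnn leq_add.
by rewrite ctmx_mul (Hh _ lk) addnC.
Qed.

Lemma schur h j p V Y :
  orth h j p -> p j = 1%:M -> hermh h j ->
  bhankel h j \in unitmx -> hatm h j p \in unitmx ->
  (forall l, (l < j)%N -> \sum_(k < j) h (l + k)%N *m Y k = V l) ->
  ctmx (bc V j) *m invmx (bhankel h j) *m bc V j =
  \sum_(k < j) ctmx (V k) *m Y k +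
  ctmx (\sum_(k < j.+1) p k *m V k) *m invmx (hatm h j p) *m (\sum_(k < j.+1) p k *m V k).
Proof.
move=> O pj Hh U Uh HY.
set beta := \sum_(k < j.+1) p k *m V k.
set Hi := invmx (hatm h j p).
pose X := fun k => (if (k < j)%N then Y k else 0) + ctmx (p k) *m Hi *m beta.
have HX : bhankel h j *m bc X j = bc V j.
  rewrite mul_hankel_bc; apply: eq_bc => l lj.
  under eq_bigr do rewrite /X mulmxDr.
  rewrite big_split /= big_ord_recr /= ltnn mulmx0 addr0.
  rewrite (eq_bigr (fun k : 'I_j => h (l + k)%N *m Y k)); last by move=> k _; rewrite ltn_ord.
  rewrite (eq_bigr (fun k : 'I_j.+1 => (h (l + k)%N *m ctmx (p k)) *m (Hi *m beta))); last first.
    by move=> k _; rewrite !mulmxA.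
  rewrite -mulmx_suml sum_adj //.
  move: lj; rewrite leq_eqVlt => /orP[/eqP ->|lj].
  - have -> : \sum_(k < j.+1) p k *m h (k + j)%N = hatm h j p by [].
    rewrite hat_QF // QF_herm // -hat_QF // mulmxA mulmxV // mul1mx.
    rewrite /beta big_ord_recr /= pj mul1mx.
    suff -> : \sum_(i < j) p i *m V i =
              - \sum_(k < j) h (j + k)%N *m Y k by rewrite addrA addrN add0r.
    transitivity (\sum_(i < j) p i *m \sum_(k < j) h (i + k)%N *m Y k).
      by apply: eq_bigr => i _; rewrite HY.
    rewrite -sumrN; under eq_bigr do rewrite mulmx_sumr.
    rewrite exchange_big /=; apply: eq_bigr => k _.
    rewrite (eq_bigr (fun i : 'I_j => (p i *m h (i + k)%N) *m Y k)); last by move=> i _; rewrite mulmxA.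
    rewrite -mulmx_suml -mulNmx; congr (_ *m _).
    have := O k (ltn_ord k); rewrite big_ord_recr /= pj mul1mx => /eqP.
    by rewrite addr_eq0 => /eqP ->; rewrite addnC.
  - by rewrite O // ctmx0 mul0mx addr0 HY.
have HX2 : invmx (bhankel h j) *m bc V j = bc X j by rewrite -HX mulKmx.
rewrite -mulmxA HX2 mul_ct_bc.
under eq_bigr do rewrite /X mulmxDr.
rewrite big_split /= big_ord_recr /= ltnn mulmx0 addr0; congr (_ + _).
  by apply: eq_bigr => k _; rewrite ltn_ord.
rewrite /beta ctmx_sum !mulmx_suml; apply: eq_bigr => k _.
by rewrite ctmx_mul !mulmxA.
Qed.

End Schur.

Section Poly.
Variable C : numClosedFieldType.
Variable q : nat.
Implicit Types h p f : nat -> 'M[C]_q.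

Definition Gv (a : C) p j := \sum_(k < j.+1) a ^+ k *: p k.
Definition Wc (a : C) p j m :=
  \sum_(k < j.+1) (if (m < k)%N then a ^+ (k - m.+1) *: p k else 0).

Lemma tele (a : C) f k :
  \sum_(m < k) a ^+ (k - m.+1) *: (f m.+1 - a *: f m) = f k - a ^+ k *: f 0.
Proof.
elim: k => [|k IH]; first by rewrite big_ord0 expr0 scale1r subrr.
rewrite big_ord_recr /= subnn expr0 scale1r.
rewrite (eq_bigr (fun m : 'I_k => a *: (a ^+ (k - m.+1) *: (f m.+1 - a *: f m)))); last first.
  by move=> m _; rewrite scalerA -exprS subSS subnSK.
rewrite -scaler_sumr IH scalerBr scalerA -exprS.
by rewrite addrC addrA subrK addrC.
Qed.

Lemma W1 (a : C) p j f :
  \sum_(k < j.+1) p k *m f k - Gv a p j *m f 0 =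
  \sum_(m < j) Wc a p j m *m (f m.+1 - a *: f m).
Proof.
under [RHS]eq_bigr do rewrite /Wc mulmx_suml.
rewrite exchange_big /= /Gv mulmx_suml -sumrB; apply: eq_bigr => k _.
rewrite (eq_bigr (fun m : 'I_j => if (m < k)%N then a ^+ (k - m.+1) *: (p k *m (f m.+1 - a *: f m)) else 0));
  last by move=> m _; case: ifP => _; rewrite ?mul0mx // -scalemxAl.
have kj : (k <= j)%N := ltn_ord k.
rewrite -big_mkcond /= (big_ord_narrow kj) /=.
rewrite (eq_bigr (fun m : 'I_k => p k *m (a ^+ (k - m.+1) *: (f m.+1 - a *: f m)))); last first.
  by move=> m _; rewrite scalemxAr.
rewrite -mulmx_sumr tele mulmxBr -scalemxAl scalemxAr //.
Qed.

Lemma Wc_last (a : C) p j : Wc a p j.+1 j = p j.+1.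
Proof.
rewrite /Wc big_ord_recr /= ltnSn subnn expr0 scale1r big1 ?add0r //.
by move=> k _; have kj : (k <= j)%N := ltn_ord k; rewrite /= ltnNge kj.
Qed.

End Poly.

Section PDsub.
Variable C : numClosedFieldType.
Variable q : nat.

Lemma bc_blocks m j (x : 'M[C]_(bsz q j, m)) :
  x = bc (fun k => @submxcol C j.+1 (fun _ => q) m x (inord k)) j.
Proof.
by rewrite -{1}[x]submxcolK; apply: eq_mxcol => k /=; rewrite inord_val.
Qed.

Lemma bc_block m j (g : nat -> 'M[C]_(q, m)) k : (k <= j)%N ->
  @submxcol C j.+1 (fun _ => q) m (bc g j) (inord k) = g k.
Proof. by move=> kj; rewrite /bc mxcolK inordK. Qed.

Lemma posdef_sub N j (h : nat -> 'M[C]_q) (g : nat -> 'cV[C]_q) :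
  posdef (bhankel h N) -> (j <= N)%N -> bc g j != 0 ->
  0 < (ctmx (bc g j) *m bhankel h j *m bc g j) 0 0.
Proof.
move=> [_ Hp] jN g0.
pose g' := fun k => if (k <= j)%N then g k else 0.
have x0 : bc g' N != 0.
  apply: contra g0 => /eqP x0; apply/eqP.
  rewrite [LHS](bc_blocks (bc g j)) -[RHS](@mxcol0 C j.+1 (fun _ => q)).
  apply: eq_mxcol => k /=.
  have kj : (k <= j)%N := ltn_ord k.
  rewrite bc_block //.
  have kN : (k <= N)%N by rewrite (leq_trans kj jN).
  have := bc_block g' kN; rewrite x0 /g' kj.
  by move=> <-; rewrite /bc submxcol0.
have := Hp _ x0; rewrite -!mulmxA !mul_hankel_bc !mul_ct_bc.
rewrite (@sum_trunc _ N j (fun k => ctmx (g' k) *m \sum_(k0 < N.+1) h (k + k0)%N *m g' k0)) //;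
  last by move=> l jl; rewrite /g' leqNgt jl /= ctmx0 mul0mx.
set S1 := \sum_(l < j.+1) _; set S2 := \sum_(l < j.+1) _.
suff -> : S1 = S2 by [].
apply: eq_bigr => l _; have lj : (l <= j)%N := ltn_ord l.
rewrite /g' lj; congr (_ *m _).
rewrite (@sum_trunc _ N j (fun k0 => h (l + k0)%N *m g' k0)) //; last by move=> k jk; rewrite /g' leqNgt jk /= mulmx0.
apply: eq_bigr => k _; have kj : (k <= j)%N := ltn_ord k; by rewrite /g' kj.
Qed.

Lemma hankel_unit N j (h : nat -> 'M[C]_q) :
  posdef (bhankel h N) -> (j <= N)%N -> bhankel h j \in unitmx.
Proof.
move=> Hp jN; rewrite unitmxE unitfE; apply/negP => /det0P[v v0 vM].
have x0 : bc (fun k => @submxcol C j.+1 (fun _ => q) 1 (ctmx v) (inord k)) j != 0.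
  rewrite -bc_blocks; apply: contra v0 => /eqP/(congr1 (@ctmx C _ _)).
  by rewrite ctmxK ctmx0 => ->.
have := posdef_sub Hp jN x0; rewrite -bc_blocks ctmxK vM mul0mx mxE ltxx.
by case.
Qed.

End PDsub.

Section Mom.
Variable C : numClosedFieldType.
Variable q : nat.
Variables (s : nat -> 'M[C]_q) (a b : C).
Hypothesis ar : a^* = a.
Hypothesis br : b^* = b.

Definition cm k := b *: s k - s k.+1.
Local Notation hm := (shat s a b).

Lemma h_c k : hm k = cm k.+1 - a *: cm k.
Proof. by apply/matrixP => i l; rewrite /shat /cm !mxE; ring. Qed.

Lemma herm_c k : ctmx (s k) = s k -> ctmx (s k.+1) = s k.+1 -> ctmx (cm k) = cm k.
Proof. by move=> h0 h1; rewrite /cm ctmxB ctmxZ br h0 h1. Qed.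

Lemma herm_h k : ctmx (s k) = s k -> ctmx (s k.+1) = s k.+1 -> ctmx (s k.+2) = s k.+2 ->
  ctmx (hm k) = hm k.
Proof. by move=> h0 h1 h2; rewrite h_c ctmxB ctmxZ ar !herm_c. Qed.

Lemma W_c j p (O : orth cm j p) k : (k < j)%N ->
  \sum_(m < j) Wc a p j m *m hm (m + k)%N = - (Gv a p j *m cm k).
Proof.
move=> kj; have := W1 a p j (fun i => cm (i + k)%N).
rewrite O // add0n sub0r => ->; apply: eq_bigr => m _.
by rewrite h_c addSn.
Qed.

Lemma odd_unit N j' p : orth cm j'.+1 p -> p j'.+1 = 1%:M ->
  posdef (bhankel hm N) -> (j' <= N)%N -> Gv a p j'.+1 \in unitmx.
Proof.
move=> O pj Hp jN; rewrite unitmxE unitfE; apply/negP => /det0P[v v0 vG].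
have W1l : Wc a p j'.+1 j' = 1%:M by rewrite Wc_last.
have := QF_pos (l0 := j') Hp jN (leqnn _) W1l v0.
suff -> : v *m QF j' hm (Wc a p j'.+1) = 0 by rewrite mul0mx mxE ltxx.
rewrite /QF exchange_big /= mulmx_sumr big1 // => k _.
by rewrite -mulmx_suml W_c // mulNmx mulmxN !mulmxA vG !mul0mx oppr0.
Qed.


Lemma odd_theta j' p : orth cm j'.+1 p ->
  (forall k, (k <= j'.*2.+2)%N -> ctmx (s k) = s k) ->
  let G := Gv a p j'.+1 in
  let T := \sum_(k < j'.+2) p k *m
       RS a (fun l => if l == 0%N then s 0 else s l - b *: s l.-1) k in
  T *m ctmx G = G *m ctmx T.
Proof.
move=> O Hs G T.
set ut := (fun l => if l == 0%N then s 0 else s l - b *: s l.-1).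
set W := Wc a p j'.+1.
have ET : T = G *m s 0 - \sum_(m < j'.+1) W m *m cm m.
  have E := W1 a p j'.+1 (RS a ut); rewrite RS0 /= -/G -/T -/W in E.
  have E2 : \sum_(m < j'.+1) W m *m (RS a ut m.+1 - a *: RS a ut m) =
            - \sum_(m < j'.+1) W m *m cm m.
    rewrite -sumrN; apply: eq_bigr => m _.
    by rewrite RSS addrC addKr /ut /= /cm -mulmxN opprB.
  by rewrite -[T](subrK (G *m s 0)) E E2 addrC.
have hc m : (m <= j')%N -> ctmx (cm m) = cm m.
  by move=> mj; apply: herm_c; apply: Hs; rewrite -addnn; lia.
have hh k : (k <= j'.*2)%N -> ctmx (hm k) = hm k.
  by move=> kj; apply: herm_h; apply: Hs; rewrite -addnn; rewrite -addnn in kj; lia.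
have EQ : \sum_(m < j'.+1) W m *m cm m *m ctmx G = - QF j' hm W.
  rewrite /QF -sumrN; apply: eq_bigr => m _.
  have mj : (m <= j')%N := ltn_ord m.
  have E1 : G *m cm m = - \sum_(k < j'.+1) W k *m hm (k + m)%N by rewrite W_c // opprK.
  rewrite -mulmxA -(hc m mj) -ctmx_mul E1 ctmxN ctmx_sum mulmxN mulmx_sumr.
  congr (- _); apply: eq_bigr => k _.
  have km : (k + m <= j'.*2)%N.
    have kj : (k <= j')%N := ltn_ord k. by rewrite -addnn leq_add.
  by rewrite ctmx_mul (hh _ km) addnC !mulmxA.
have ETG : T *m ctmx G = G *m s 0 *m ctmx G + QF j' hm W.
  by rewrite -mulmx_suml in EQ; rewrite {1}ET mulmxBl EQ opprK.
have -> : G *m ctmx T = ctmx (T *m ctmx G) by rewrite ctmx_mul ctmxK.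
have s0 : ctmx (s 0) = s 0 by apply: Hs.
by rewrite ETG ctmxD QF_herm // !ctmx_mul ctmxK s0 mulmxA.
Qed.

Lemma even_GQ j p : orth hm j p -> hermh hm j ->
  (forall k, (k <= j)%N -> ctmx (cm k) = cm k) ->
  Gv a p j *m ctmx (\sum_(k < j.+1) p k *m cm k) = QF j cm p.
Proof.
move=> O Hh Hc.
rewrite /QF exchange_big /=.
have E k : \sum_(l < j.+1) p l *m cm (l + k)%N =
    Gv a p j *m cm k + \sum_(m < j) Wc a p j m *m hm (m + k)%N.
  have := W1 a p j (fun i => cm (i + k)%N); rewrite add0n => E.
  rewrite -[LHS](subrK (Gv a p j *m cm k)) E addrC; congr (_ + _).
  by apply: eq_bigr => m _; rewrite h_c addSn.
under [RHS]eq_bigr do rewrite -mulmx_suml E mulmxDl.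
have Z : \sum_(k < j.+1) (\sum_(m < j) Wc a p j m *m hm (m + k)%N) *m ctmx (p k) = 0.
  under eq_bigr do rewrite mulmx_suml.
  rewrite exchange_big /= big1 // => m _.
  under eq_bigr do rewrite -mulmxA.
  have mj : (m <= j)%N by apply: ltnW.
  by rewrite -mulmx_sumr sum_adj // O // ctmx0 mulmx0.
rewrite big_split /= Z addr0.
  rewrite ctmx_sum mulmx_sumr; apply: eq_bigr => k _.
  have kj : (k <= j)%N := ltn_ord k.
  by rewrite ctmx_mul (Hc _ kj) mulmxA.
Qed.

Lemma even_unit N j p : orth hm j p -> hermh hm j -> p j = 1%:M ->
  (forall k, (k <= j)%N -> ctmx (cm k) = cm k) ->
  posdef (bhankel cm N) -> (j <= N)%N -> (\sum_(k < j.+1) p k *m cm k) \in unitmx.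
Proof.
move=> O Hh pj Hc Hp jN; rewrite unitmxE unitfE; apply/negP => /det0P[v v0 vQ].
have := QF_pos (l0 := j) Hp jN (leqnn _) pj v0.
rewrite -even_GQ // !mulmxA -mulmxA -ctmx_mul vQ ctmx0 mulmx0 mxE ltxx.
by case.
Qed.

End Mom.

Section Phi.
Variable C : numClosedFieldType.
Variable q : nat.
Implicit Types h p V : nat -> 'M[C]_q.

Definition phi h j V := ctmx (bc V j) *m invmx (bhankel h j) *m bc V j.

Lemma phi_step h j' p V : orth h j'.+1 p -> p j'.+1 = 1%:M -> hermh h j'.+1 ->
  bhankel h j'.+1 \in unitmx -> bhankel h j' \in unitmx -> hatm h j'.+1 p \in unitmx ->
  phi h j'.+1 V - phi h j' V =
  ctmx (\sum_(k < j'.+2) p k *m V k) *m invmx (hatm h j'.+1 p) *m (\sum_(k < j'.+2) p k *m V k).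
Proof.
move=> O pj Hh U U' Uh.
pose Y := fun k => @submxcol C j'.+1 (fun _ => q) q (invmx (bhankel h j') *m bc V j') (inord k).
have EY : bc Y j' = invmx (bhankel h j') *m bc V j' by rewrite /Y -bc_blocks.
have HY : forall l, (l < j'.+1)%N -> \sum_(k < j'.+1) h (l + k)%N *m Y k = V l.
  move=> l lj.
  have := congr1 (fun M => @submxcol C j'.+1 (fun _ => q) q M (inord l))
            (etrans (congr1 (mulmx (bhankel h j')) EY) (mulKVmx U' (bc V j'))).
  by rewrite mul_hankel_bc !bc_block.
rewrite /phi (schur (Y := Y) O pj Hh U Uh HY).
rewrite -[ctmx (bc V j') *m _ *m _]mulmxA -EY mul_ct_bc.
by rewrite addrAC subrr add0r.
Qed.

Lemma phi_0 h V : ctmx (h 0%N) = h 0%N -> bhankel h 0 \in unitmx -> h 0%N \in unitmx ->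
  phi h 0 V = ctmx (V 0%N) *m invmx (h 0%N) *m V 0%N.
Proof.
move=> Hh U Uh.
have hat0 : hatm h 0 (fun _ => 1%:M) = h 0%N by rewrite /hatm big_ord1 mul1mx.
have O : orth h 0 (fun _ => 1%:M) by [].
have Hh' : hermh h 0 by case.
have Uh' : hatm h 0 (fun _ => 1%:M) \in unitmx by rewrite hat0.
rewrite /phi (schur (Y := fun _ => 0) O erefl Hh' U Uh') //.
by rewrite big_ord0 add0r hat0 big_ord1 mul1mx.
Qed.

End Phi.

Section Blk.
Variable C : numClosedFieldType.
Variable q : nat.

Lemma odd_block (G T K : 'M[C]_q) (c : C) : G \in unitmx -> T *m ctmx G = G *m ctmx T ->
  block_mx (1%:M - c *: (ctmx T *m invmx K *m G)) (c *: (ctmx T *m invmx K *m T))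
           (- (c *: (ctmx G *m invmx K *m G))) (1%:M + c *: (ctmx G *m invmx K *m T)) =
  block_mx 1%:M (invmx G *m T) 0 1%:M *m
  block_mx 1%:M 0 (- (c *: (ctmx G *m invmx K *m G))) 1%:M *m
  block_mx 1%:M (- (invmx G *m T)) 0 1%:M.
Proof.
move=> U E.
set Ki := invmx K; set r := invmx G *m T.
have rG : r *m ctmx G = ctmx T by rewrite /r -mulmxA E mulmxA mulVmx // mul1mx.
have rM : r *m (ctmx G *m Ki *m G) = ctmx T *m Ki *m G by rewrite !mulmxA rG.
have Gr : G *m r = T by rewrite /r mulmxA mulmxV // mul1mx.
rewrite !mulmx_block !(mul1mx, mulmx1, mul0mx, mulmx0, add0r, addr0).
have rcM : r *m - (c *: (ctmx G *m Ki *m G)) = - (c *: (ctmx T *m Ki *m G)).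
  by rewrite mulmxN -scalemxAr rM.
rewrite rcM.
congr block_mx.
- rewrite mulmxN mulmxDl mul1mx mulNmx -scalemxAl -!mulmxA Gr.
  by rewrite opprD opprK addrC addrA addrN add0r.
- by rewrite mulNmx mulmxN opprK -scalemxAl -!mulmxA Gr addrC.
Qed.

Lemma even_block (P Q H : 'M[C]_q) (c : C) : Q \in unitmx -> P *m ctmx Q = Q *m ctmx P ->
  block_mx (1%:M + c *: (ctmx Q *m invmx H *m P)) (c *: (ctmx Q *m invmx H *m Q))
           (- (c *: (ctmx P *m invmx H *m P))) (1%:M - c *: (ctmx P *m invmx H *m Q)) =
  block_mx 1%:M 0 (- (invmx Q *m P)) 1%:M *m
  block_mx 1%:M (c *: (ctmx Q *m invmx H *m Q)) 0 1%:M *m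
  block_mx 1%:M 0 (invmx Q *m P) 1%:M.
Proof.
move=> U E.
set Hi := invmx H; set t := invmx Q *m P.
have tQ : t *m ctmx Q = ctmx P by rewrite /t -mulmxA E mulmxA mulVmx // mul1mx.
have Qt : Q *m t = P by rewrite /t mulmxA mulmxV // mul1mx.
rewrite !mulmx_block !(mul1mx, mulmx1, mul0mx, mulmx0, add0r, addr0).
congr block_mx.
- by rewrite -scalemxAl -!mulmxA Qt.
- rewrite mulmxDl mul1mx mulNmx -scalemxAr mulNmx -scalemxAl !mulmxA tQ -!mulmxA Qt.
  by rewrite addrCA addNr addr0.
- by rewrite mulNmx -scalemxAr !mulmxA tQ addrC.
Qed.

End Blk.

Section Conc.
Variable C : numClosedFieldType.
Variable q : nat.
Variables (s : nat -> 'M[C]_q) (a b : C).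

Local Notation c := (cm s b).
Local Notation hh := (shat s a b).

Lemma RS_delta (z : C) k : RS z (fun l => if l == 0%N then 1%:M else 0 : 'M[C]_q) k = z ^+ k *: 1%:M.
Proof.
elim: k => [|k IH]; first by rewrite RS0 expr0 scale1r.
by rewrite RSS IH /= addr0 scalerA -exprS.
Qed.

Lemma Rm_vv j (z : C) : Rm q j z *m vv C q j = bc (fun k => z ^+ k *: 1%:M) j.
Proof. by rewrite /vv bcolE Rm_bc; apply: eq_bc => k _; rewrite RS_delta. Qed.

Lemma Gam1E j' : Gam1 s b j'.+1 a = Gv a (pco c j') j'.+1.
Proof.
have -> : Gam1 s b j'.+1 a = rowXI (Acoef c j') *m Rm q j'.+1 a *m vv C q j'.+1 by [].
rewrite -mulmxA Rm_vv pco_vec /Gv; apply: eq_bigr => k _.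
by rewrite -scalemxAr mulmx1.
Qed.

Lemma P2E j' : P2 s a b j'.+1 a = Gv a (pco hh j') j'.+1.
Proof.
have -> : P2 s a b j'.+1 a = rowXI (Acoef hh j') *m Rm q j'.+1 a *m vv C q j'.+1 by [].
rewrite -mulmxA Rm_vv pco_vec /Gv; apply: eq_bigr => k _.
by rewrite -scalemxAr mulmx1.
Qed.

Lemma The1E j' : The1 s b j'.+1 a = \sum_(k < j'.+2) pco c j' k *m
       RS a (fun l => if l == 0%N then s 0%N else s l - b *: s l.-1) k.
Proof.
have -> : The1 s b j'.+1 a = rowXI (Acoef c j') *m Rm q j'.+1 a *m ut1 s b j'.+1 by [].
by rewrite -mulmxA /ut1 bcolE Rm_bc pco_vec.
Qed.

Lemma Khat1E j' : bhankel c j' \in unitmx -> Khat1 s b j'.+1 = hatm c j'.+1 (pco c j').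
Proof. by move=> U; rewrite /hatm -pco_hat. Qed.

Lemma Hhat2E j' : bhankel hh j' \in unitmx -> Hhat2 s a b j'.+1 = hatm hh j'.+1 (pco hh j').
Proof. by move=> U; rewrite /hatm -pco_hat. Qed.

Lemma muE j : mu s a b j = phi c j (fun k => a ^+ k *: 1%:M).
Proof.
by rewrite /mu /phi -ctmx_mul -mulmxA Rm_vv.
Qed.

Lemma RS_w k : RS a (fun l => (if l == 0%N then u20 s a b else - hh l.-1) +
                        a *: ((if l == 0%N then 1%:M else 0) *m s 0%N)) k = - c k.
Proof.
elim: k => [|k IH].
  by rewrite RS0 /= mul1mx; apply/matrixP => i l; rewrite /u20 /cm !mxE; ring.
rewrite RSS IH /= mul0mx scaler0 addr0 h_c.
by apply/matrixP => i l; rewrite !mxE; ring.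
Qed.

Lemma Rm_w j : Rm q j a *m (u2 s a b j + a *: (vv C q j *m s 0%N)) = bc (fun k => - c k) j.
Proof.
rewrite /u2 /vv !bcolE mul_bc bcZ bcD Rm_bc.
by apply: eq_bc => k _; rewrite RS_w.
Qed.

Lemma Q2E j' : Q2 s a b j'.+1 a = \sum_(k < j'.+2) pco hh j' k *m c k.
Proof.
have -> : Q2 s a b j'.+1 a = - (rowXI (Acoef hh j') *m Rm q j'.+1 a *m
              (u2 s a b j'.+1 + a *: (vv C q j'.+1 *m s 0%N))) by [].
rewrite -mulmxA Rm_w pco_vec -sumrN; apply: eq_bigr => k _.
by rewrite mulmxN opprK.
Qed.

Lemma Q20 : Q2 s a b 0 a = c 0%N.
Proof. by apply/matrixP => i l; rewrite /Q2 /u20 /cm !mxE; ring. Qed.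

Lemma lamE j : lam s a b j = phi hh j (fun k => - c k).
Proof.
by rewrite /lam /phi -ctmx_mul -mulmxA Rm_w.
Qed.

End Conc.
Unset Implicit Arguments.

Theorem mainTheorem5 (C : numClosedFieldType) (q n : nat) (s : nat -> 'M[C]_q) (a b : C) :
  (0 < q)%N -> (0 < n)%N ->
  a \is Num.real -> b \is Num.real -> a < b ->
  (forall k, (k <= n.*2.+1)%N -> hermmx (s k)) ->
  posdef (H1 s n) -> posdef (H2 s a b n.-1) -> posdef (K1 s b n) -> posdef (K2 s a n) ->
  (forall j, (j <= n)%N -> Gam1 s b j a \in unitmx) /\
  (forall j, (j < n)%N -> Q2 s a b j a \in unitmx) /\
  (forall j, (j <= n)%N -> forall z : C,
     let r := invmx (Gam1 s b j a) *m The1 s b j a in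
     d_odd s a b j z =
       block_mx 1%:M r 0 1%:M *m block_mx 1%:M 0 (- ((z - a) *: mbf s a b j)) 1%:M
       *m block_mx 1%:M (- r) 0 1%:M) /\
  (forall j, (j < n)%N -> forall z : C,
     let t := invmx (Q2 s a b j a) *m P2 s a b j a in
     d_even s a b j z =
       block_mx 1%:M 0 (- t) 1%:M *m block_mx 1%:M ((z - a) *: lbf s a b j) 0 1%:M
       *m block_mx 1%:M 0 t 1%:M).
Proof.
move=> q0 n0 areal breal ab Hs H1p H2p K1p K2p.
have ar : a^* = a := conj_Creal areal.
have br : b^* = b := conj_Creal breal.
case: n n0 Hs H1p H2p K1p K2p => [//|n] _ Hs _ H2p K1p _.
rewrite /= in H2p.
set c := cm s b.
set hh := shat s a b.
have Kp : posdef (bhankel c n.+1) := K1p.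
have Hp : posdef (bhankel hh n) := H2p.
have hs k : (k <= n.+1.*2.+1)%N -> ctmx (s k) = s k := Hs k.
have hc k : (k <= n.+1.*2)%N -> ctmx (c k) = c k.
  by move=> kn; apply: herm_c => //; apply: hs; rewrite -addnn in kn *; lia.
have hhm k : (k <= n.*2.+1)%N -> ctmx (hh k) = hh k.
  by move=> kn; apply: herm_h => //; apply: hs; rewrite -addnn in kn *; lia.
pose pC j := if j is j'.+1 then pco c j' else (fun _ : nat => 1%:M : 'M[C]_q).
pose pH j := if j is j'.+1 then pco hh j' else (fun _ : nat => 1%:M : 'M[C]_q).
have pCj j : pC j j = 1%:M by case: j => [|j] //; rewrite /pC pco_last.
have pHj j : pH j j = 1%:M by case: j => [|j] //; rewrite /pH pco_last.
have Uc j : (j <= n.+1)%N -> bhankel c j \in unitmx by move=> jn; exact: hankel_unit Kp jn.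
have Uh j : (j <= n)%N -> bhankel hh j \in unitmx by move=> jn; exact: hankel_unit Hp jn.
have OC j : (j <= n.+1)%N -> orth c j (pC j).
  case: j => [|j] jn; first by [].
  apply: pco_orth; first by apply: Uc; lia.
  by move=> k kj; apply: hc; rewrite -addnn in kj *; lia.
have OH j : (j <= n)%N -> orth hh j (pH j).
  case: j => [|j] jn; first by [].
  apply: pco_orth; first by apply: Uh; lia.
  by move=> k kj; apply: hhm; rewrite -addnn in kj *; lia.
have GamE j : Gam1 s b j a = Gv a (pC j) j.
  case: j => [|j]; last exact: Gam1E.
  by rewrite /Gv big_ord1 expr0 scale1r.
have KhE j : (j <= n.+1)%N -> Khat1 s b j = hatm c j (pC j).
  case: j => [|j] jn; last by apply: Khat1E; apply: Uc; lia.
  by rewrite /hatm big_ord1 mul1mx.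
have hermc j : (j <= n.+1)%N -> hermh c j.
  by move=> jn k kj; apply: hc; rewrite -addnn in kj *; lia.
have hermH j : (j <= n)%N -> hermh hh j.
  by move=> jn k kj; apply: hhm; rewrite -addnn in kj *; lia.
have KhU j : (j <= n.+1)%N -> hatm c j (pC j) \in unitmx.
  move=> jn; rewrite hat_QF.
  - exact: (@QF_unit C q n.+1 j c (pC j) j Kp jn (leqnn _) (pCj j)).
  - exact: OC.
  - exact: pCj.
  - exact: hermc.
have ODD1 j : (j <= n.+1)%N -> Gam1 s b j a \in unitmx.
  case: j => [|j] jn; first by rewrite unitmx1.
  rewrite Gam1E; apply: (@odd_unit C q s a b n j).
  - exact: (OC j.+1).
  - exact: (pCj j.+1).
  - exact: Hp.
  - lia.
have PE j : P2 s a b j a = Gv a (pH j) j.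
  case: j => [|j]; last exact: P2E.
  by rewrite /Gv big_ord1 expr0 scale1r.
have QE j : Q2 s a b j a = \sum_(k < j.+1) pH j k *m c k.
  case: j => [|j]; last exact: Q2E.
  by rewrite Q20 big_ord1 mul1mx.
have HhE j : (j <= n)%N -> Hhat2 s a b j = hatm hh j (pH j).
  case: j => [|j] jn; last by apply: Hhat2E; apply: Uh; lia.
  by rewrite /hatm big_ord1 mul1mx.
have HhU j : (j <= n)%N -> hatm hh j (pH j) \in unitmx.
  move=> jn; rewrite hat_QF.
  - exact: (@QF_unit C q n j hh (pH j) j Hp jn (leqnn _) (pHj j)).
  - exact: OH.
  - exact: pHj.
  - exact: hermH.
have EVEN1 j : (j < n.+1)%N -> Q2 s a b j a \in unitmx.
  move=> jn; rewrite QE; apply: (@even_unit C q s a b n.+1 j (pH j)).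
  - exact: OH.
  - exact: hermH.
  - exact: pHj.
  - by move=> k kj; apply: hc; rewrite -addnn; lia.
  - exact: Kp.
  - lia.
have GQ j : (j <= n)%N -> P2 s a b j a *m ctmx (Q2 s a b j a) = Q2 s a b j a *m ctmx (P2 s a b j a).
  move=> jn; rewrite PE QE.
  have hcj : forall k, (k <= j)%N -> ctmx (c k) = c k.
    by move=> k kj; apply: hc; rewrite -addnn; lia.
  have E := @even_GQ C q s a b j (pH j) (OH j jn) (hermH j jn) hcj.
  set G := Gv a (pH j) j; set Q := \sum_(k < j.+1) pH j k *m c k.
  have -> : Q *m ctmx G = ctmx (G *m ctmx Q) by rewrite ctmx_mul ctmxK.
  rewrite E QF_herm //; apply: hermc; lia.
have ThE j : (j <= n.+1)%N ->
    The1 s b j a *m ctmx (Gam1 s b j a) = Gam1 s b j a *m ctmx (The1 s b j a).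
  case: j => [|j] jn.
    by rewrite /= ctmx1 mulmx1 mul1mx hs.
  rewrite The1E Gam1E; apply: (@odd_theta C q s a b ar br j (pco c j)).
  - exact: (OC j.+1).
  - by move=> k kj; apply: hs; rewrite -addnn in kj *; lia.
have mbfE j : (j <= n.+1)%N ->
    mbf s a b j = ctmx (Gam1 s b j a) *m invmx (Khat1 s b j) *m Gam1 s b j a.
  case: j => [|j] jn.
    have c0 : Khat1 s b 0 = c 0%N by [].
    rewrite /mbf muE phi_0.
    - by rewrite /= expr0 scale1r ctmx1.
    - by apply: hc.
    - by apply: Uc.
    - by have := KhU 0%N isT; rewrite -KhE.
  rewrite /mbf !muE (@phi_step C q c j (pC j.+1)).
  - rewrite -(KhE j.+1) // GamE; congr (ctmx _ *m _ *m _); apply: eq_bigr => k _;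
    by rewrite -scalemxAr mulmx1.
  - exact: (OC j.+1).
  - exact: (pCj j.+1).
  - exact: (hermc j.+1).
  - exact: Uc.
  - by apply: Uc; lia.
  - exact: (KhU j.+1).
have lbfE j : (j <= n)%N ->
    lbf s a b j = ctmx (Q2 s a b j a) *m invmx (Hhat2 s a b j) *m Q2 s a b j a.
  case: j => [|j] jn.
    have h0 : Hhat2 s a b 0 = hh 0%N by [].
    rewrite /lbf lamE phi_0.
    - by rewrite Q20 ctmxN !mulNmx mulmxN opprK.
    - by apply: hhm.
    - by apply: Uh.
    - by have := HhU 0%N isT; rewrite -HhE.
  rewrite /lbf !lamE (@phi_step C q hh j (pH j.+1)).
  - have SN : forall (F : nat -> 'M[C]_q) m,
        \sum_(k < m) F k *m - c k = - \sum_(k < m) F k *m c k.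
      by move=> F m; rewrite -sumrN; apply: eq_bigr => k _; rewrite mulmxN.
    by rewrite -(HhE j.+1) // QE !SN ctmxN !mulNmx mulmxN opprK.
  - exact: (OH j.+1).
  - exact: (pHj j.+1).
  - exact: (hermH j.+1).
  - exact: Uh.
  - by apply: Uh; lia.
  - exact: (HhU j.+1).
split; first exact: ODD1.
split; first exact: EVEN1.
split.
  move=> j jn z r; rewrite /d_odd /= mbfE //.
  by apply: odd_block; [exact: ODD1 | exact: ThE].
move=> j jn z t; rewrite /d_even /= lbfE //.
by apply: even_block; [exact: EVEN1 | apply: GQ].
Qed.
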